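(* Let $G=(V,E,w)$ be an undirected graph on $n$ nodes with positive edge weights, let $k$ be an integer with $1\le k\le n$, and let $\mathbf{A}\in\{\mathbf{A}_D,\mathbf{A}_P\}$. Let $c\in[0,1)$ and $\boldsymbol{\epsilon}\in[-c,1-c]^n$, and let the innate opinions be $\mathbf{s}_0=c\mathbf{1}+\boldsymbol{\epsilon}$. Let $\gamma_1,\gamma_2,\gamma_3\in(0,1)$ and assume that for all sets $X\subseteq V$ with $|X|=k$: (1) $(\mathbf{s}_X-\mathbf{s}_0)^{\intercal}\mathbf{A}\mathbf{s}_0\ge-\gamma_1\,\mathbf{s}_0^{\intercal}\mathbf{A}\mathbf{s}_0$; (2) $\boldsymbol{\epsilon}_{|X}^{\intercal}\mathbf{A}\boldsymbol{\epsilon}_{|X}\le\gamma_2\,\mathbf{s}_0^{\intercal}\mathbf{A}\mathbf{s}_0$; (3) $|\boldsymbol{\epsilon}_{|X}^{\intercal}\mathbf{A}\mathbf{1}_{|X}|\le\gamma_3\,\mathbf{s}_0^{\intercal}\mathbf{A}\mathbf{s}_0$. Suppose we have access to a $\beta$-approximation algorithm for the limited-information problem (L) below. Then one can compute a feasible solution for the full-information problem (F) below whose objective value is at least $\frac14\min\left\{\beta,\frac{1-2\gamma_1-2(1-c)\gamma_3}{1+2(1-c)\gamma_3+\gamma_2}\right\}$ times the optimal value of (F), using only the graph $G$ (and $k$) but not the opinions $\mathbf{s}_0$.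
   Context: $\mathbf{L}$ is the Laplacian of $G$ ($\mathbf{L}=\mathbf{D}-\mathbf{W}$ with $\mathbf{W}$ the weighted adjacency matrix and $\mathbf{D}$ the diagonal weighted degree matrix), $\mathbf{A}_D=(\mathbf{L}+\mathbf{I})^{-1}\mathbf{L}(\mathbf{L}+\mathbf{I})^{-1}$ (disagreement) and $\mathbf{A}_P=(\mathbf{I}+\mathbf{L})^{-1}(\mathbf{I}-\frac{\mathbf{1}\mathbf{1}^{\intercal}}{n})(\mathbf{I}+\mathbf{L})^{-1}$ (polarization); $\mathbf{1}$ is the all-ones vector. For $X\subseteq V$, $\mathbf{s}_X\in[0,1]^n$ is given by $\mathbf{s}_X(u)=1$ if $u\in X$ and $\mathbf{s}_X(u)=\mathbf{s}_0(u)$ otherwise; for a vector $\mathbf{v}$, $\mathbf{v}_{|X}(u)=\mathbf{v}(u)$ if $u\in X$ and $0$ otherwise. Problem (F) (full information; input $G$, $\mathbf{s}_0$, $k$): maximize $\mathbf{s}^{\intercal}\mathbf{A}\mathbf{s}$ subject to $\|\mathbf{s}-\mathbf{s}_0\|_0=k$ and $\mathbf{s}(u)\in\{\mathbf{s}_0(u),1\}$ for all $u\in V$. Problem (L) (limited information; input $G$, $k$): maximize $\mathbf{s}^{\intercal}\mathbf{A}\mathbf{s}$ subject to $\|\mathbf{s}\|_0=k$ and $\mathbf{s}\in[0,1]^n$. A $\beta$-approximation algorithm ($\beta\in(0,1]$) for (L) outputs a set $X\subseteq V$ with $|X|=k$ whose indicator vector $\mathbf{1}_{|X}$ attains value at least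 $\beta$ times the optimum of (L). *)

(* Defs.v *)
From HB Require Import structures.
From mathcomp Require Import all_boot all_order all_algebra.
Set Implicit Arguments. Unset Strict Implicit. Unset Printing Implicit Defensive.
Import Order.TTheory GRing.Theory Num.Theory.
Local Open Scope ring_scope.

Section Defs.
Variables (R : realFieldType) (n : nat).

(* A weighted undirected graph on vertex set 'I_n is given by its weighted
   adjacency matrix W: symmetric, nonnegative entries (edges = positive
   entries), no self-loops. *)
Definition weighted_graph (W : 'M[R]_n) : Prop :=
  [/\ W^T = W, forall i j, 0 <= W i j & forall i, W i i = 0].

Definition degmx (W : 'M[R]_n) : 'M[R]_n :=
  diag_mx (\row_i \sum_j W i j).
Definition laplacian (W : 'M[R]_n) : 'M[R]_n := degmx W - W.

Definition AD (W : 'M[R]_n) : 'M[R]_n :=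
  invmx (laplacian W + 1%:M) *m laplacian W *m invmx (laplacian W + 1%:M).

Definition AP (W : 'M[R]_n) : 'M[R]_n :=
  invmx (1%:M + laplacian W) *m (1%:M - (n%:R)^-1 *: const_mx 1)
        *m invmx (1%:M + laplacian W).

Definition qf (A : 'M[R]_n) (s : 'cV[R]_n) : R := (s^T *m A *m s) 0 0.
Definition bf (u : 'cV[R]_n) (A : 'M[R]_n) (v : 'cV[R]_n) : R :=
  (u^T *m A *m v) 0 0.

Definition ones : 'cV[R]_n := const_mx 1.

Definition l0 (s : 'cV[R]_n) : nat := #|[set i | s i 0 != 0]|.

Definition sX (s0 : 'cV[R]_n) (X : {set 'I_n}) : 'cV[R]_n :=
  \col_i (if i \in X then 1 else s0 i 0).

Definition restr (v : 'cV[R]_n) (X : {set 'I_n}) : 'cV[R]_n :=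
  \col_i (if i \in X then v i 0 else 0).

(* X is the output of a beta-approximation algorithm for (L):
   |X| = k and 1_{|X}^T A 1_{|X} >= beta * s^T A s for every feasible s of (L),
   i.e. >= beta * OPT(L). *)
Definition approx_L (A : 'M[R]_n) (k : nat) (beta : R) (X : {set 'I_n}) : Prop :=
  #|X| = k /\
  forall s : 'cV[R]_n, (forall i, 0 <= s i 0 <= 1) -> l0 s = k ->
    beta * qf A s <= qf A (restr ones X).

End Defs.

(* Main.v *)
Require Import Defs.
From HB Require Import structures.
From mathcomp Require Import all_boot all_order all_algebra.
From mathcomp Require Import ring lra.
Import Order.TTheory GRing.Theory Num.Theory.
Local Open Scope ring_scope.

Section Aux1.
Variables (R : realFieldType) (n : nat).
Implicit Types (A M : 'M[R]_n) (u v w : 'cV[R]_n).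

Lemma bfDl u v w A : bf (u + v) A w = bf u A w + bf v A w.
Proof. by rewrite /bf linearD /= !mulmxDl mxE. Qed.
Lemma bfDr u v w A : bf w A (u + v) = bf w A u + bf w A v.
Proof. by rewrite /bf mulmxDr mxE. Qed.
Lemma bfZl a u w A : bf (a *: u) A w = a * bf u A w.
Proof. by rewrite /bf linearZ /= -!scalemxAl mxE. Qed.
Lemma bfZr a u w A : bf w A (a *: u) = a * bf w A u.
Proof. by rewrite /bf -scalemxAr mxE. Qed.
Lemma bfNl u w A : bf (- u) A w = - bf u A w.
Proof. by rewrite -scaleN1r bfZl mulN1r. Qed.
Lemma bfNr u w A : bf w A (- u) = - bf w A u.
Proof. by rewrite -scaleN1r bfZr mulN1r. Qed.
Lemma bfC u v A : A^T = A -> bf u A v = bf v A u.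
Proof.
move=> sA; rewrite /bf; transitivity ((u^T *m A *m v)^T 0 0); first by rewrite [RHS]mxE.
by rewrite !trmx_mul sA trmxK mulmxA.
Qed.
Lemma qf_add u v A : A^T = A -> qf A (u + v) = qf A u + 2 * bf v A u + qf A v.
Proof.
move=> sA; rewrite /qf -!/(bf _ _ _) bfDl !bfDr (bfC u v A sA); ring.
Qed.
Lemma qf_sub a u v A : A^T = A ->
  qf A (a *: u - v) = a ^+ 2 * qf A u - 2 * a * bf v A u + qf A v.
Proof.
move=> sA; rewrite /qf -!/(bf _ _ _) bfDl !bfDr !bfNl !bfNr !bfZl !bfZr.
rewrite (bfC u v A sA); ring.
Qed.
End Aux1.
Section Aux.
Variables (R : realFieldType) (n : nat).
Implicit Types (W A M B : 'M[R]_n) (u v w x : 'cV[R]_n).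

Lemma qf_sum A x : qf A x = \sum_j \sum_i x i 0 * A i j * x j 0.
Proof.
rewrite /qf mxE; apply: eq_bigr => j _; rewrite mxE mulr_suml.
by apply: eq_bigr => i _; rewrite mxE.
Qed.

Lemma lap_sym W : weighted_graph W -> (laplacian W)^T = laplacian W.
Proof. by case=> sW _ _; rewrite /laplacian linearB /= tr_diag_mx sW. Qed.

Lemma lap_psd W x : weighted_graph W -> 0 <= qf (laplacian W) x.
Proof.
case=> sW pW dW.
have sWij i j : W i j = W j i by rewrite -{1}sW mxE.
pose T := \sum_j \sum_i W j i * (x j 0 ^+ 2 - x j 0 * x i 0).
have E : qf (laplacian W) x = T.
  rewrite qf_sum; apply: eq_bigr => j _.
  under eq_bigr => i _ do rewrite /laplacian /degmx !mxE mulrBr mulrBl.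
  rewrite sumrB [X in X - _](bigD1 j) //= [X in _ + X - _]big1; last first.
    by move=> i /negbTE ->; rewrite mulr0n mulr0 mul0r.
  rewrite eqxx mulr1n addr0 mulr_sumr mulr_suml -sumrB.
  by apply: eq_bigr => i _; rewrite [W i j]sWij; ring.
have E2 : T = \sum_j \sum_i W j i * (x i 0 ^+ 2 - x i 0 * x j 0).
  rewrite /T exchange_big /=; apply: eq_bigr => j _; apply: eq_bigr => i _.
  by rewrite [W i j]sWij.
have E3 : T + T = \sum_j \sum_i W j i * (x j 0 - x i 0) ^+ 2.
  rewrite {1}E2 /T -big_split; apply: eq_bigr => j _.
  rewrite -big_split; apply: eq_bigr => i _ /=; ring.
have : 0 <= T + T.
  rewrite E3; apply: sumr_ge0 => j _; apply: sumr_ge0 => i _.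
  by apply: mulr_ge0 => //; apply: sqr_ge0.
rewrite E; lra.
Qed.

Definition Pc : 'M[R]_n := 1%:M - (n%:R)^-1 *: const_mx 1.

Lemma Pc_sym : Pc^T = Pc.
Proof. by rewrite /Pc linearB linearZ /= tr_scalar_mx trmx_const. Qed.

Lemma Pc_psd x : 0 <= qf Pc x.
Proof.
pose S := \sum_i x i 0.
have E : qf Pc x = \sum_j x j 0 ^+ 2 - (n%:R)^-1 * S ^+ 2.
  rewrite qf_sum.
  under eq_bigr => j _ do under eq_bigr => i _ do
    rewrite /Pc !mxE mulrBr mulrBl.
  have -> : (n%:R)^-1 * S ^+ 2 = \sum_j (x j 0 * ((n%:R)^-1 * S)).
    by rewrite -mulr_suml -/S; ring.
  rewrite -sumrB; apply: eq_bigr => j _.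
  rewrite sumrB [X in X - _](bigD1 j) //= [X in _ + X - _]big1; last first.
    by move=> i /negbTE ->; rewrite mulr0n mulr0 mul0r.
  rewrite eqxx mulr1n addr0 -!mulr_suml -/S; ring.
rewrite E.
have [n0|n0] := eqVneq n 0%N.
  have -> : (n%:R : R) = 0 by rewrite n0.
  rewrite invr0 mul0r subr0; apply: sumr_ge0 => j _; apply: sqr_ge0.
have nz : (n%:R : R) != 0 by rewrite pnatr_eq0.
have H : \sum_j (x j 0 - S / n%:R) ^+ 2 =
         \sum_j x j 0 ^+ 2 - (n%:R)^-1 * S ^+ 2.
  under eq_bigr => j _ do rewrite sqrrB.
  rewrite big_split /= sumrB sumrMnl -mulr_suml -/S sumr_const card_ord.
  rewrite -[_ *+ n]mulr_natr -[_ *+ 2]mulr_natr; field; exact: nz.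
rewrite -H; apply: sumr_ge0 => j _; apply: sqr_ge0.
Qed.

Lemma sand_sym M B : M^T = M -> B^T = B -> (M *m B *m M)^T = M *m B *m M.
Proof. by move=> sM sB; rewrite !trmx_mul sM sB mulmxA. Qed.

Lemma sand_qf M B x : M^T = M -> qf (M *m B *m M) x = qf B (M *m x).
Proof. by move=> sM; rewrite /qf trmx_mul sM !mulmxA. Qed.

Lemma A_props W A : weighted_graph W -> (A = AD W \/ A = AP W) ->
  A^T = A /\ forall x, 0 <= qf A x.
Proof.
move=> gW [->|->].
  have sM : (invmx (laplacian W + 1%:M))^T = invmx (laplacian W + 1%:M).
    by rewrite trmx_inv linearD /= lap_sym // tr_scalar_mx.
  split; first by rewrite /AD sand_sym // lap_sym.
  by move=> x; rewrite /AD sand_qf //; apply: lap_psd.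
have sM : (invmx (1%:M + laplacian W))^T = invmx (1%:M + laplacian W).
  by rewrite trmx_inv linearD /= lap_sym // tr_scalar_mx.
split; first by rewrite /AP sand_sym // -/Pc Pc_sym.
by move=> x; rewrite /AP -/Pc sand_qf //; apply: Pc_psd.
Qed.
End Aux.

Theorem theorem3p1 (R : realFieldType) (n : nat) (W : 'M[R]_n) (k : nat)
  (A : 'M[R]_n) (c : R) (eps : 'cV[R]_n) (g1 g2 g3 beta : R) :
  weighted_graph W ->
  (1 <= k <= n)%N ->
  (A = AD W \/ A = AP W) ->
  0 <= c < 1 ->
  (forall i, - c <= eps i 0 <= 1 - c) ->
  0 < g1 < 1 -> 0 < g2 < 1 -> 0 < g3 < 1 ->
  0 < beta <= 1 ->
  let s0 := c *: ones R n + eps in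
  (forall X : {set 'I_n}, #|X| = k ->
     [/\ bf (sX s0 X - s0) A s0 >= - g1 * qf A s0,
         qf A (restr eps X) <= g2 * qf A s0
       & `|bf (restr eps X) A (restr (ones R n) X)| <= g3 * qf A s0]) ->
  forall X : {set 'I_n}, approx_L A k beta X ->
  forall Y : {set 'I_n}, #|Y| = k ->
    4^-1 * Num.min beta
      ((1 - 2 * g1 - 2 * (1 - c) * g3) / (1 + 2 * (1 - c) * g3 + g2))
      * qf A (sX s0 Y)
    <= qf A (sX s0 X).
Proof.
move=> gW hk hA /andP[c0 c1] heps /andP[g10 g11] /andP[g20 g21] /andP[g30 g31]
  /andP[b0 b1] s0 hyp X [cardX apX] Y cardY.
have [sA psd] := @A_props R n W A gW hA.
have dE Z : sX s0 Z - s0 = (1 - c) *: restr (ones R n) Z - restr eps Z.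
  apply/matrixP => i j; rewrite (ord1 j) !mxE.
  by case: (i \in Z); rewrite /=; ring.
have qsE Z : qf A (sX s0 Z) = qf A s0 + 2 * bf (sX s0 Z - s0) A s0 +
   ((1 - c) ^+ 2 * qf A (restr (ones R n) Z)
    - 2 * (1 - c) * bf (restr eps Z) A (restr (ones R n) Z)
    + qf A (restr eps Z)).
  rewrite -{1}(subrK s0 (sX s0 Z)) [_ - s0 + s0]addrC qf_add //.
  congr (_ + _ + _).
  by rewrite dE qf_sub.
have uYb : 2 * bf (sX s0 Y - s0) A s0 <= qf A (sX s0 Y - s0) + qf A s0.
  have := psd (1 *: s0 - (sX s0 Y - s0)); rewrite qf_sub //; lra.
have qdE : qf A (sX s0 Y - s0) = (1 - c) ^+ 2 * qf A (restr (ones R n) Y)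
    - 2 * (1 - c) * bf (restr eps Y) A (restr (ones R n) Y)
    + qf A (restr eps Y) by rewrite dE qf_sub.
have hbeta : beta * qf A (restr (ones R n) Y) <= qf A (restr (ones R n) X).
  apply: apX.
    by move=> i; rewrite !mxE; case: (i \in Y); rewrite /= ?lexx ?ler01.
  rewrite /l0 -[RHS]cardY; apply: eq_card => i.
  by rewrite !inE !mxE; case: (i \in Y); rewrite /= ?oner_neq0 ?eqxx.
have [hX1 hX2 hX3] := hyp X cardX.
have [hY1 hY2 hY3] := hyp Y cardY.
move: (qsE X) (qsE Y) uYb qdE hbeta hX1 hX3 hY2 hY3.
have := psd s0; have := psd (restr eps X); have := psd (restr (ones R n) Y).
have := psd (sX s0 Y); have := psd (sX s0 X).
set a := qf A s0; set qX := qf A (restr (ones R n) X).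
set qY := qf A (restr (ones R n) Y).
set uX := bf (sX s0 X - s0) A s0; set uY := bf (sX s0 Y - s0) A s0.
set tX := bf (restr eps X) A (restr (ones R n) X).
set tY := bf (restr eps Y) A (restr (ones R n) Y).
set eX := qf A (restr eps X); set eY := qf A (restr eps Y).
set qdY := qf A (sX s0 Y - s0).
set qsX := qf A (sX s0 X); set qsY := qf A (sX s0 Y).
move=> qsX0 qsY0 qY0 eX0 a0 EX EY uYb qdE hbeta hX1 hX3 hY2 hY3.
set P := 1 - 2 * g1 - 2 * (1 - c) * g3.
set Q := 1 + 2 * (1 - c) * g3 + g2.
set m := Num.min beta (P / Q).
have c1' : 0 <= 1 - c by lra.
have htX : (1 - c) * tX <= (1 - c) * (g3 * a).
  by apply: ler_wpM2l => //; apply: le_trans (ler_norm _) hX3.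
have htY : - ((1 - c) * tY) <= (1 - c) * (g3 * a).
  rewrite -mulrN; apply: ler_wpM2l => //.
  by apply: le_trans hY3; rewrite -normrN ler_norm.
have lowX : P * a + (1 - c) ^+ 2 * qX <= qsX by rewrite EX /P; lra.
have upY : qsY <= 2 * Q * a + 2 * ((1 - c) ^+ 2 * qY) by rewrite EY /Q; lra.
have [m0|m0] := lerP m 0.
  have : m * qsY <= 0 by apply: mulr_le0_ge0.
  lra.
have mb : m <= beta by rewrite /m ge_min lexx.
have Q0 : 0 < Q by rewrite /Q; nra.
have mPQ : m * Q <= P.
  have : m <= P / Q by rewrite /m ge_min lexx orbT.
  by rewrite ler_pdivlMr.
have P0 : 0 <= P by have := mulr_gt0 m0 Q0; lra.
have K0 : 0 <= (1 - c) ^+ 2 * qY by apply: mulr_ge0 => //; apply: sqr_ge0.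
have h1 : m * qsY <= m * (2 * Q * a + 2 * ((1 - c) ^+ 2 * qY)).
  by apply: ler_wpM2l => //; apply: ltW.
have h2 : (m * Q) * a <= P * a by apply: ler_wpM2r.
have h3 : m * ((1 - c) ^+ 2 * qY) <= beta * ((1 - c) ^+ 2 * qY).
  by apply: ler_wpM2r.
have h4 : (1 - c) ^+ 2 * (beta * qY) <= (1 - c) ^+ 2 * qX.
  by apply: ler_wpM2l => //; apply: sqr_ge0.
have h5 : 0 <= P * a by apply: mulr_ge0.
have h6 : 0 <= (1 - c) ^+ 2 * qX.
  apply: le_trans h4; apply: mulr_ge0; first exact: sqr_ge0.
  exact: mulr_ge0 (ltW b0) qY0.
lra.
Qed.
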